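(* Let $H$ be a complex Hilbert space and let $R \in \mathcal{L}(H)$ be an operator of finite rank. Then $I + R$ satisfies the property $\mathcal{AN}^*$.
   Context: $\mathcal{L}(H)$ is the space of bounded linear operators on $H$; $I$ is the identity. For a closed subspace $M \neq \{0\}$ of $H$ and $T \in \mathcal{L}(H)$, write $[T|_M] := \inf\{\|Tx\| : x \in M, \|x\|=1\}$; $T|_M$ satisfies $\mathcal{N}^*$ if there is $x_0 \in M$ with $\|x_0\|=1$ and $\|Tx_0\| = [T|_M]$. $T$ satisfies the property $\mathcal{AN}^*$ if $T|_M$ satisfies $\mathcal{N}^*$ for every closed subspace $M \neq \{0\}$ of $H$. *)

(* Defs.v *)
From HB Require Import structures.
From mathcomp Require Import all_boot all_order all_algebra.
From mathcomp Require Import complex.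
From mathcomp Require Import boolp classical_sets reals.
Set Implicit Arguments. Unset Strict Implicit. Unset Printing Implicit Defensive.
Import Order.TTheory GRing.Theory Num.Theory.
Local Open Scope ring_scope.
Local Open Scope classical_set_scope.

Section Hilbert.
Variable R : realType.
Local Notation C := (R[i]).

Record inner_product (V : lmodType C) := InnerProduct {
  ip : V -> V -> C;
  ip_linl : forall (a : C) (x y z : V), ip (a *: x + y) z = a * ip x z + ip y z;
  ip_conj : forall x y : V, ip y x = conjc (ip x y);
  ip_ge0 : forall x : V, 0 <= ip x x;
  ip_eq0 : forall x : V, ip x x = 0 -> x = 0 }.

Variable V : lmodType C.

Definition hnorm (P : inner_product V) (x : V) : R := Num.sqrt (complex.Re (ip P x x)).

Definition cauchy_seq (P : inner_product V) (u : nat -> V) : Prop :=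
  forall e : R, 0 < e -> exists N : nat, forall m n : nat,
    (N <= m)%N -> (N <= n)%N -> hnorm P (u m - u n) < e.

Definition converges_to (P : inner_product V) (u : nat -> V) (l : V) : Prop :=
  forall e : R, 0 < e -> exists N : nat, forall n : nat,
    (N <= n)%N -> hnorm P (u n - l) < e.

Record hilbert := Hilbert {
  hip :> inner_product V;
  hcomplete : forall u : nat -> V, cauchy_seq hip u -> exists l, converges_to hip u l }.

Variable H : hilbert.

Definition bounded_linear (T : V -> V) : Prop :=
  (forall (a : C) (x y : V), T (a *: x + y) = a *: T x + T y) /\
  exists M : R, forall x : V, hnorm H (T x) <= M * hnorm H x.

Definition finite_rank (T : V -> V) : Prop :=
  exists (n : nat) (e : 'I_n -> V), forall x : V,
    exists c : 'I_n -> C, T x = \sum_(i < n) c i *: e i.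

Definition closed_subspace (M : set V) : Prop :=
  M 0 /\
  (forall (a : C) (x y : V), M x -> M y -> M (a *: x + y)) /\
  (forall (u : nat -> V) (l : V), (forall n, M (u n)) -> converges_to H u l -> M l).

Definition restr_lower_bound (T : V -> V) (M : set V) : R :=
  inf [set hnorm H (T x) | x in [set x | M x /\ hnorm H x = 1]].

Definition restr_Nstar (T : V -> V) (M : set V) : Prop :=
  exists x0 : V, M x0 /\ hnorm H x0 = 1 /\ hnorm H (T x0) = restr_lower_bound T M.

Definition ANstar (T : V -> V) : Prop :=
  forall M : set V, closed_subspace M -> M <> [set 0] -> restr_Nstar T M.

End Hilbert.

(* Main.v *)
Require Import Defs.
From HB Require Import structures.
From mathcomp Require Import all_boot all_order all_algebra.
From mathcomp Require Import complex.
From mathcomp Require Import boolp classical_sets reals.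
From mathcomp Require Import ring lra.
From mathcomp Require Import topology normedtype matrix_normedtype derive.
Set Implicit Arguments. Unset Strict Implicit. Unset Printing Implicit Defensive.
Import Order.TTheory GRing.Theory Num.Theory.
Local Open Scope ring_scope.
Local Open Scope complex_scope.
Local Open Scope classical_set_scope.
Import numFieldNormedType.Exports.
Import numFieldNormedType.Exports.

Section IP.
Variables (R : realType) (V : lmodType R[i]) (P : inner_product V).
Local Notation "<< x , y >>" := (ip P x y).
Local Notation C := R[i].

Lemma ip0l z : <<0, z>> = 0.
Proof.
have := ip_linl P 1 0 0 z; rewrite scaler0 addr0 mul1r => h.
by rewrite -[LHS]addr0 in h; move/addrI: h.
Qed.
Lemma ipDl x y z : <<x + y, z>> = <<x, z>> + <<y, z>>.
Proof. by rewrite -{1}(scale1r x) ip_linl mul1r. Qed.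
Lemma ipZl a x z : <<a *: x, z>> = a * <<x, z>>.
Proof. by rewrite -(addr0 (a *: x)) ip_linl ip0l addr0. Qed.
Lemma ipNl x z : <<- x, z>> = - <<x, z>>.
Proof. by rewrite -scaleN1r ipZl mulN1r. Qed.
Lemma ipBl x y z : <<x - y, z>> = <<x, z>> - <<y, z>>.
Proof. by rewrite ipDl ipNl. Qed.
Lemma ip0r z : <<z, 0>> = 0.
Proof. by rewrite ip_conj ip0l conjc0. Qed.
Lemma ipDr x y z : <<z, x + y>> = <<z, x>> + <<z, y>>.
Proof. by rewrite ip_conj ipDl rmorphD (ip_conj P x z) (ip_conj P y z). Qed.
Lemma ipZr a x z : <<z, a *: x>> = conjc a * <<z, x>>.
Proof. by rewrite ip_conj ipZl rmorphM (ip_conj P x z). Qed.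
Lemma ipNr x z : <<z, - x>> = - <<z, x>>.
Proof. by rewrite ip_conj ipNl rmorphN (ip_conj P x z). Qed.
Lemma ipBr x y z : <<z, x - y>> = <<z, x>> - <<z, y>>.
Proof. by rewrite ipDr ipNr. Qed.
Lemma ip_suml I (r : seq I) (Q : pred I) (f : I -> V) z :
  <<\sum_(i <- r | Q i) f i, z>> = \sum_(i <- r | Q i) <<f i, z>>.
Proof. by rewrite (big_morph (fun x => ip P x z) (fun x y => ipDl x y z) (ip0l z)). Qed.
Lemma ip_sumr I (r : seq I) (Q : pred I) (f : I -> V) z :
  <<z, \sum_(i <- r | Q i) f i>> = \sum_(i <- r | Q i) <<z, f i>>.
Proof. by rewrite (big_morph (fun x => ip P z x) (fun x y => ipDr x y z) (ip0r z)). Qed.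

Lemma ReD (a b : C) : complex.Re (a + b) = complex.Re a + complex.Re b.
Proof. by case: a; case: b. Qed.
Lemma ImD (a b : C) : complex.Im (a + b) = complex.Im a + complex.Im b.
Proof. by case: a; case: b. Qed.
Lemma ReN (a : C) : complex.Re (- a) = - complex.Re a.
Proof. by case: a. Qed.
Lemma ReM (a b : C) : complex.Re (a * b) = complex.Re a * complex.Re b - complex.Im a * complex.Im b.
Proof. by case: a; case: b. Qed.
Lemma ImM (a b : C) : complex.Im (a * b) = complex.Re a * complex.Im b + complex.Im a * complex.Re b.
Proof. by case: a => ? ?; case: b => ? ? /=; ring. Qed.
Lemma ReJ (a : C) : complex.Re (conjc a) = complex.Re a.
Proof. by case: a. Qed.
Lemma ImJ (a : C) : complex.Im (conjc a) = - complex.Im a.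
Proof. by case: a. Qed.
Lemma Re_sum I (r : seq I) (Q : pred I) (f : I -> C) :
  complex.Re (\sum_(i <- r | Q i) f i) = \sum_(i <- r | Q i) complex.Re (f i).
Proof. by rewrite (big_morph (@complex.Re R) ReD (erefl (complex.Re (0:C)))). Qed.
Lemma Im_sum I (r : seq I) (Q : pred I) (f : I -> C) :
  complex.Im (\sum_(i <- r | Q i) f i) = \sum_(i <- r | Q i) complex.Im (f i).
Proof. by rewrite (big_morph (@complex.Im R) ImD (erefl (complex.Im (0:C)))). Qed.

Lemma ipxx_Im x : complex.Im <<x, x>> = 0.
Proof. by have := ip_ge0 P x; rewrite lecE /= => /andP[/eqP <-]. Qed.
Lemma ipxx_Re_ge0 x : 0 <= complex.Re <<x, x>>.
Proof. by have := ip_ge0 P x; rewrite lecE /= => /andP[_]. Qed.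
Lemma ipxxE x : <<x, x>> = (complex.Re <<x, x>>)%:C.
Proof. by move: (ipxx_Im x); case: (<<x,x>>) => a b /= ->. Qed.

Lemma hnorm_ge0 x : 0 <= hnorm P x.
Proof. exact: sqrtr_ge0. Qed.
Lemma hnorm_sq x : hnorm P x ^+ 2 = complex.Re <<x, x>>.
Proof. by rewrite /hnorm sqr_sqrtr // ipxx_Re_ge0. Qed.
Lemma hnorm_eq0 x : hnorm P x = 0 -> x = 0.
Proof.
move=> h; apply: (@ip_eq0 _ _ P); rewrite ipxxE -hnorm_sq h.
by rewrite expr0n.
Qed.

Lemma C1E : (1:R)%:C = 1 :> C. Proof. by []. Qed.
Lemma C0E : (0:R)%:C = 0 :> C. Proof. by []. Qed.
Lemma CN1E : (-1:R)%:C = -1 :> C.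
Proof. by apply/eqP; rewrite eq_complex /= oppr0 !eqxx. Qed.

Definition nsq x := complex.Re <<x, x>>.
Lemma nsq_ge0 x : 0 <= nsq x. Proof. exact: ipxx_Re_ge0. Qed.
Lemma hnormE x : hnorm P x = Num.sqrt (nsq x). Proof. by []. Qed.

Lemma hnorm_nsq x : hnorm P x ^+ 2 = nsq x. Proof. exact: hnorm_sq. Qed.

Lemma Re_ip_sym x y : complex.Re <<y, x>> = complex.Re <<x, y>>.
Proof. by rewrite ip_conj ReJ. Qed.
Lemma Im_ip_sym x y : complex.Im <<y, x>> = - complex.Im <<x, y>>.
Proof. by rewrite ip_conj ImJ. Qed.

Lemma nsq_lin (s t : R) x y :
  nsq (s%:C *: x + t%:C *: y) =
  s ^+ 2 * nsq x + 2 * s * t * complex.Re <<x, y>> + t ^+ 2 * nsq y.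
Proof.
rewrite /nsq !(ipDl, ipDr, ipZl, ipZr) !conjc_real (ip_conj P x y).
move: (<<x,x>>) (<<x,y>>) (<<y,y>>) => [a1 b1] [a2 b2] [a3 b3].
rewrite /real_complex_def /=; ring.
Qed.

Lemma nsqD x y : nsq (x + y) = nsq x + 2 * complex.Re <<x, y>> + nsq y.
Proof.
have := nsq_lin 1 1 x y; rewrite C1E !scale1r => ->.
ring.
Qed.

Lemma nsqB x y : nsq (x - y) = nsq x - 2 * complex.Re <<x, y>> + nsq y.
Proof.
have := nsq_lin 1 (-1) x y.
rewrite C1E CN1E.
rewrite scale1r scaleN1r => ->; ring.
Qed.

Lemma nsqZ (t : R) x : nsq (t%:C *: x) = t ^+ 2 * nsq x.
Proof.
have := nsq_lin t 0 x x; rewrite C0E scale0r addr0 => ->.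
ring.
Qed.

Lemma CS x y : complex.Re <<x, y>> <= hnorm P x * hnorm P y.
Proof.
set a := complex.Re <<x, y>>.
have hb := nsq_ge0 y; have hc := nsq_ge0 x.
have key : a ^+ 2 <= nsq x * nsq y.
  have [y0|ypos] := eqVneq (nsq y) 0.
    have y00 : y = 0.
      by apply: (@ip_eq0 _ _ P); rewrite ipxxE -/(nsq y) y0.
    by rewrite /a y00 ip0r /= expr0n /= -y00 mulr_ge0.
  have hbp : 0 < nsq y by rewrite lt_def ypos hb.
  have := nsq_ge0 ((nsq y)%:C *: x + (- a)%:C *: y); rewrite nsq_lin -/a.
  have -> : nsq y ^+ 2 * nsq x + 2 * nsq y * - a * a + (- a) ^+ 2 * nsq y =
            nsq y * (nsq x * nsq y - a ^+ 2) by ring.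
  by rewrite pmulr_rge0 // subr_ge0.
have hp : 0 <= hnorm P x * hnorm P y by rewrite mulr_ge0 // hnorm_ge0.
have e : (hnorm P x * hnorm P y) ^+ 2 = nsq x * nsq y by rewrite exprMn !hnorm_nsq.
nra.
Qed.

Lemma CSabs x y : `|complex.Re <<x, y>>| <= hnorm P x * hnorm P y.
Proof.
rewrite ler_norml CS andbT lerNl.
have := CS (- x) y; rewrite ipNl ReN.
suff -> : hnorm P (- x) = hnorm P x by [].
by rewrite /hnorm ipNl ipNr opprK.
Qed.

Lemma sqrt_le_of (p q : R) : 0 <= p -> q <= p ^+ 2 -> Num.sqrt q <= p.
Proof.
move=> hp hq; apply: le_trans (ler_wsqrtr hq) _.
by rewrite sqrtr_sqr ger0_norm.
Qed.

Lemma hnorm_triangle x y : hnorm P (x + y) <= hnorm P x + hnorm P y.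
Proof.
rewrite {1}/hnorm; apply: sqrt_le_of; first by rewrite addr_ge0 ?hnorm_ge0.
rewrite -/(nsq _) nsqD -!hnorm_nsq.
have := CS x y; have := hnorm_ge0 x; have := hnorm_ge0 y; nra.
Qed.

Lemma hnormN x : hnorm P (- x) = hnorm P x.
Proof. by rewrite /hnorm ipNl ipNr opprK. Qed.

Lemma hnormZ (t : R) x : hnorm P (t%:C *: x) = `|t| * hnorm P x.
Proof. by rewrite /hnorm -/(nsq _) nsqZ sqrtrM ?sqr_ge0 // sqrtr_sqr. Qed.
End IP.

Section Eps.
Variable R : realType.
Definition eps (n : nat) : R := ((n.+1)%:R)^-1.
Lemma eps_gt0 n : 0 < eps n. Proof. by rewrite /eps invr_gt0 ltr0n. Qed.
Lemma eps_le1 n : eps n <= 1.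
Proof. by rewrite /eps invf_le1 ?ltr0n // ler1n. Qed.
Lemma eps_mono m n : (m <= n)%N -> eps n <= eps m.
Proof. by move=> mn; rewrite /eps lef_pV2 ?posrE ?ltr0n // ler_nat ltnS. Qed.
Lemma eps_small (e : R) : 0 < e -> exists N, forall n, (N <= n)%N -> eps n < e.
Proof.
move=> e0; exists (Num.Def.archi_bound e^-1) => n hn.
rewrite /eps invf_plt ?posrE ?ltr0n //.
apply: lt_le_trans (archi_boundP _) _; first by rewrite invr_ge0 ltW.
by rewrite ler_nat; apply: leq_trans hn _.
Qed.
End Eps.

Lemma sqrt_lt_of (R : realType) (e q : R) : 0 < e -> q < e ^+ 2 -> Num.sqrt q < e.
Proof.
move=> e0 hq; have : Num.sqrt q < Num.sqrt (e ^+ 2) by rewrite ltr_sqrt ?exprn_gt0.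
by rewrite sqrtr_sqr gtr0_norm.
Qed.

Section Proj.
Variables (R : realType) (V : lmodType R[i]) (H : hilbert V).
Local Notation "<< x , y >>" := (ip H x y).
Local Notation C := R[i].
Local Notation hn := (hnorm H).

Lemma nsq_subZ (c : C) z k :
  nsq H (z - c *: k) = nsq H z - 2 * complex.Re (conjc c * <<z, k>>)
     + (complex.Re c ^+ 2 + complex.Im c ^+ 2) * nsq H k.
Proof.
rewrite /nsq !(ipBl, ipBr, ipZl, ipZr) (ip_conj _ z k) (ipxxE _ z) (ipxxE _ k).
move: c (<<z,k>>) (complex.Re <<z,z>>) (complex.Re <<k,k>>) => [a b] [p q] u v.
rewrite /real_complex_def /=; ring.
Qed.

Lemma subspace0 (K : set V) : closed_subspace H K -> K 0.
Proof. by case. Qed.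
Lemma subspaceD (K : set V) x y : closed_subspace H K -> K x -> K y -> K (x + y).
Proof. by case=> _ [h _] kx ky; rewrite -(scale1r x); apply: h. Qed.
Lemma subspaceZ (K : set V) a x : closed_subspace H K -> K x -> K (a *: x).
Proof. by move=> hK kx; rewrite -(addr0 (a *: x)); apply: hK.2.1 => //; apply: subspace0. Qed.
Lemma subspaceN (K : set V) x : closed_subspace H K -> K x -> K (- x).
Proof. by move=> hK kx; rewrite -scaleN1r; apply: subspaceZ. Qed.
Lemma subspaceB (K : set V) x y : closed_subspace H K -> K x -> K y -> K (x - y).
Proof. by move=> hK kx ky; apply: subspaceD => //; apply: subspaceN. Qed.

Lemma projection (K : set V) : closed_subspace H K ->
  forall x, exists p, K p /\ forall k, K k -> <<x - p, k>> = 0.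
Proof.
move=> hK x.
pose S := (fun k : V => hn (x - k)) @` K.
pose d := inf S.
have S0 : S !=set0 by exists (hn (x - 0)); exists 0 => //; apply: subspace0.
have Slb : has_lbound S by exists 0 => _ [k _ <-]; apply: hnorm_ge0.
have dle k : K k -> d <= hn (x - k) by move=> kk; apply: ge_inf => //; exists k.
have d0 : 0 <= d by apply: lb_le_inf => // _ [k _ <-]; apply: hnorm_ge0.
have approx n : exists k, K k /\ hn (x - k) < d + eps R n.
  have : inf S < d + eps R n by rewrite ltrDl eps_gt0.
  by case/(inf_lt S0) => _ [k kk <-] h; exists k.
have [ks hks] := choice approx.
have cauchy : cauchy_seq H ks.
  move=> e e0.
  pose eta := e ^+ 2 / (8 * d + 4).
  have d84 : 0 < 8 * d + 4 by lra.
  have eta0 : 0 < eta by rewrite divr_gt0 // exprn_gt0.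
  have etaE : eta * (8 * d + 4) = e ^+ 2 by rewrite /eta mulfVK // gt_eqF.
  have [N hN] := eps_small eta0.
  exists N => m n hm hn'.
  apply: sqrt_lt_of => //.
  have [km hm'] := hks m; have [kn hn''] := hks n.
  pose mid := (2^-1 : R)%:C *: (ks m + ks n).
  have kmid : K mid by apply: subspaceZ => //; apply: subspaceD.
  have hc := dle _ kmid.
  have par : nsq H (ks m - ks n) =
      2 * nsq H (x - ks m) + 2 * nsq H (x - ks n) - 4 * nsq H (x - mid).
    have e1 : ks m - ks n = (x - ks n) - (x - ks m).
      by rewrite opprB addrCA addrAC subrr add0r.
    have e2 : (2 : R)%:C *: (x - mid) = (x - ks n) + (x - ks m).
      rewrite scalerBr /mid scalerA -rmorphM mulfV ?pnatr_eq0 // rmorph1 scale1r.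
      rewrite (_ : (2:R)%:C = 1 + 1) ?scalerDl ?scale1r; last first.
        by apply/eqP; rewrite eq_complex /= addr0 !eqxx.
      by rewrite opprD addrACA addrC.
    have h1 := nsqD H (x - ks n) (- (x - ks m)).
    have h2 := nsqD H (x - ks n) (x - ks m).
    rewrite ipNr ReN in h1.
    have hN' : nsq H (- (x - ks m)) = nsq H (x - ks m) by rewrite /nsq ipNl ipNr opprK.
    rewrite hN' in h1; rewrite -e2 nsqZ in h2; rewrite e1 h1.
    rewrite (_ : (2:R) ^+ 2 = 4) in h2; last by rewrite expr2; lra.
    lra.
  rewrite -/(nsq H (ks m - ks n)) par -!hnorm_nsq.
  have em := hN _ hm; have en := hN _ hn'.
  have := eps_le1 R m; have := eps_le1 R n.
  have := eps_gt0 R m; have := eps_gt0 R n.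
  have := hnorm_ge0 H (x - ks m); have := hnorm_ge0 H (x - ks n).
  move: hm' hn'' hc em en etaE d0.
  set a := hn (x - ks m); set b := hn (x - ks n); set c := hn (x - mid).
  set em' := eps R m; set en' := eps R n.
  move=> *; nra.
have [l hl] := hcomplete cauchy.
have kl : K l by apply: hK.2.2 hl => n; case: (hks n).
have hxl : hn (x - l) = d.
  apply/eqP; rewrite eq_le dle // andbT.
  apply/ler_addgt0Pr => eta eta0.
  have eta2 : 0 < eta / 2 by rewrite divr_gt0.
  have [N1 hN1] := hl _ eta2.
  have [N2 hN2] := eps_small eta2.
  pose n := maxn N1 N2.
  have h1 := hN1 n (leq_maxl _ _); have h2 := hN2 n (leq_maxr _ _).
  have [_ h3] := hks n.
  have : hn (x - l) <= hn (x - ks n) + hn (ks n - l).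
    by have := hnorm_triangle H (x - ks n) (ks n - l); rewrite addrA subrK.
  move=> h4; lra.
exists l; split => // k kk.
set z := x - l.
set w := <<z, k>>.
pose t := (nsq H k + 1)^-1.
have nk0 := nsq_ge0 H k.
have t0 : 0 < t by rewrite invr_gt0; lra.
have tE : t * (nsq H k + 1) = 1 by rewrite mulVf //; lra.
have kc : K (l + (t%:C * w) *: k) by apply: subspaceD => //; apply: subspaceZ.
have := dle _ kc.
rewrite opprD addrA -/z -hxl => hle.
have : nsq H z <= nsq H (z - (t%:C * w) *: k).
  by rewrite -!hnorm_nsq; apply: lerXn2r => //; rewrite nnegrE hnorm_ge0.
rewrite nsq_subZ -/w.
clear kc hle; move: w => [p q]; rewrite /real_complex_def /=.
set s := p ^+ 2 + q ^+ 2.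
have -> : (t * p - 0 * q) * p - - (t * q + 0 * p) * q = t * s by rewrite /s; ring.
have -> : (t * p - 0 * q) ^+ 2 + (t * q + 0 * p) ^+ 2 = t ^+ 2 * s by rewrite /s; ring.
move=> h.
have hs : p ^+ 2 + q ^+ 2 = 0.
  have hs0 : 0 <= p ^+ 2 + q ^+ 2 by rewrite addr_ge0 ?sqr_ge0.
  have htk : t * nsq H k <= 1 by lra.
  have h3 : t * s <= 0 by nra.
  rewrite pmulr_rle0 // in h3.
  by apply/le_anti; rewrite h3.
have p0 : p = 0 by apply/eqP; rewrite -sqrf_eq0; apply/eqP; nra.
have q0 : q = 0 by apply/eqP; rewrite -sqrf_eq0; apply/eqP; nra.
by rewrite p0 q0.
Qed.
End Proj.

Lemma Im_ip_bound (R : realType) (V : lmodType R[i]) (P : inner_product V) x y :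
  `|complex.Im (ip P x y)| <= hnorm P x * hnorm P y.
Proof.
have := CSabs P x ('i *: y).
have -> : hnorm P ('i *: y) = hnorm P y.
  rewrite /hnorm ipZl ipZr; congr (Num.sqrt _).
  by move: (ip P y y) => [a b] /=; ring.
rewrite ipZr; move: (ip P x y) => [a b] /=.
by rewrite mul0r sub0r mulN1r opprK.
Qed.

Lemma complex_eq0 (R : realType) (c : R[i]) :
  (forall eta : R, 0 < eta -> `|complex.Re c| <= eta /\ `|complex.Im c| <= eta) -> c = 0.
Proof.
move=> h.
have z (r : R) : (forall eta : R, 0 < eta -> `|r| <= eta) -> r = 0.
  move=> hr; apply/eqP; rewrite -normr_eq0; apply/eqP/le_anti.
  rewrite normr_ge0 andbT; apply/ler_addgt0Pr => eta eta0; rewrite add0r; exact: hr.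
case: c h => a b h.
have a0 : a = 0 by apply: z => eta /h [].
have b0 : b = 0 by apply: z => eta /h [].
by apply/eqP; rewrite eq_complex /= a0 b0 !eqxx.
Qed.

Lemma split_lshift m p (j : 'I_m) : split (lshift p j) = inl j.
Proof. exact: (unsplitK (inl j)). Qed.
Lemma split_rshift m p (j : 'I_p) : split (rshift m j) = inr j.
Proof. exact: (unsplitK (inr j)). Qed.

Section Cont.
Variable R : realType.
Lemma cont_sum m k (F : 'I_m -> 'rV[R]_k -> R) :
  (forall i, continuous (F i)) -> continuous (fun v => \sum_(i < m) F i v).
Proof.
move=> hF.
suff: forall s : seq 'I_m, continuous (fun v => \sum_(i <- s) F i v) by apply.
elim => [|i s IH].
  under eq_fun => v do rewrite big_nil. exact: cst_continuous.
under eq_fun => v do rewrite big_cons.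
move=> v; apply: continuousD; [exact: hF | exact: IH].
Qed.
Lemma cont_coord k (j : 'I_k) : continuous (fun v : 'rV[R]_k => v ord0 j).
Proof. exact: coord_continuous. Qed.
Lemma cont_mul k (a b : 'rV[R]_k -> R) : continuous a -> continuous b -> continuous (fun v => a v * b v).
Proof. by move=> ha hb v; apply: continuousM; [exact: ha | exact: hb]. Qed.
Lemma cont_add k (a b : 'rV[R]_k -> R) : continuous a -> continuous b -> continuous (fun v => a v + b v).
Proof. by move=> ha hb v; apply: continuousD; [exact: ha | exact: hb]. Qed.
Lemma cont_sub k (a b : 'rV[R]_k -> R) : continuous a -> continuous b -> continuous (fun v => a v - b v).
Proof. by move=> ha hb v; apply: continuousB; [exact: ha | exact: hb]. Qed.
Lemma cont_cst k (c : R) : continuous (fun v : 'rV[R]_k => c).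
Proof. exact: cst_continuous. Qed.
End Cont.

Section Main.
Variables (R : realType) (V : lmodType R[i]) (H : hilbert V) (Rk : V -> V).
Local Notation "<< x , y >>" := (ip H x y).
Local Notation C := R[i].
Local Notation hn := (hnorm H).
Hypothesis hlin : forall (a : C) (x y : V), Rk (a *: x + y) = a *: Rk x + Rk y.
Variable B : R.
Hypothesis hB : forall x, hn (Rk x) <= B * hn x.
Variables (n : nat) (e : 'I_n -> V).
Hypothesis hrk : forall x, exists c : 'I_n -> C, Rk x = \sum_(i < n) c i *: e i.
Variable M : set V.
Hypothesis hM : closed_subspace H M.

Lemma Rk0 : Rk 0 = 0.
Proof.
have := hlin 1 0 0; rewrite scaler0 addr0 scale1r => h.
by rewrite -[LHS]addr0 in h; move/addrI: h.
Qed.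
Lemma RkD x y : Rk (x + y) = Rk x + Rk y.
Proof. by have := hlin 1 x y; rewrite !scale1r. Qed.
Lemma RkZ a x : Rk (a *: x) = a *: Rk x.
Proof. by rewrite -(addr0 (a *: x)) hlin Rk0 addr0. Qed.
Lemma RkN x : Rk (- x) = - Rk x.
Proof. by rewrite -scaleN1r RkZ scaleN1r. Qed.
Lemma RkB x y : Rk (x - y) = Rk x - Rk y.
Proof. by rewrite RkD RkN. Qed.
Lemma Rk_sum m (c : 'I_m -> C) (f : 'I_m -> V) :
  Rk (\sum_(i < m) c i *: f i) = \sum_(i < m) c i *: Rk (f i).
Proof.
elim/big_rec2: _ => [|i y1 y2 _ <-]; first exact: Rk0.
by rewrite hlin.
Qed.

Lemma hB' x : hn (Rk x) <= `|B| * hn x.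
Proof. apply: le_trans (hB x) _; apply: ler_wpM2r; [exact: hnorm_ge0 | exact: ler_norm]. Qed.

Definition T x := x + Rk x.
Lemma T_sum m (c : 'I_m -> C) (f : 'I_m -> V) :
  T (\sum_(i < m) c i *: f i) = \sum_(i < m) c i *: T (f i).
Proof.
rewrite /T Rk_sum -big_split /=; apply: eq_bigr => i _; by rewrite scalerDr.
Qed.

Lemma lim_ip0 (F : V -> V) (A : R) (u : nat -> V) l g :
  (forall a b, F (a - b) = F a - F b) -> (forall x, hn (F x) <= A * hn x) -> 0 <= A ->
  converges_to H u l -> (forall k, <<F (u k), g>> = 0) -> <<F l, g>> = 0.
Proof.
move=> FB FA A0 hl hu; apply: complex_eq0 => eta eta0.
pose c := A * hn g + 1.
have c0 : 0 < c by rewrite /c ltr_pwDr // mulr_ge0 // hnorm_ge0.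
have [N hN] := hl (eta / c) (divr_gt0 eta0 c0).
have e1 : <<F l, g>> = <<F (l - u N), g>> by rewrite FB ipBl hu subr0.
have h1 := hN N (leqnn N).
have hln : hn (l - u N) = hn (u N - l) by rewrite -hnormN opprB.
have b1 : hn (F (l - u N)) * hn g <= A * hn g * (eta / c).
  rewrite -mulrA [hn g * _]mulrC mulrA ler_wpM2r ?hnorm_ge0 //.
  apply: le_trans (FA _) _; rewrite hln; apply: ler_wpM2l => //; exact: ltW.
have b2 : A * hn g * (eta / c) <= eta.
  rewrite mulrA ler_pdivrMr // [eta * c]mulrC; apply: ler_wpM2r; first exact: ltW.
  by rewrite /c lerDl.
rewrite e1; split.
- by apply: le_trans (CSabs _ _ _) _; apply: le_trans b1 b2.
- by apply: le_trans (Im_ip_bound _ _ _) _; apply: le_trans b1 b2.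
Qed.

Definition K := [set x | M x /\ forall j, <<Rk x, e j>> = 0 /\ <<x, e j>> = 0].

Lemma K_sub : closed_subspace H K.
Proof.
split; [|split].
- split; first exact: subspace0 hM.
  by move=> j; rewrite Rk0 !ip0l.
- move=> a x y [mx hx] [my hy]; split; first by apply: hM.2.1.
  move=> j; rewrite hlin !ip_linl; have [-> ->] := hx j; have [-> ->] := hy j.
  by rewrite mulr0 addr0.
- move=> u l hu hl; split.
    by apply: hM.2.2 hl => k; case: (hu k).
  move=> j; split.
    apply: (@lim_ip0 Rk `|B| u) => //; first exact: RkB.
      exact: hB'.
    by move=> k; case: (hu k) => _ /(_ j) [].
  apply: (@lim_ip0 id 1 u) => //; first by move=> x; rewrite mul1r.
  by move=> k; case: (hu k) => _ /(_ j) [].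
Qed.

Lemma K_Rk k : K k -> Rk k = 0.
Proof.
move=> [_ hk]; have [c hc] := hrk k.
apply: (@ip_eq0 _ _ H); rewrite {2}hc ip_sumr big1 // => i _.
by rewrite ipZr; have [-> _] := hk i; rewrite mulr0.
Qed.

Lemma K_orth k w : K k -> <<k, Rk w>> = 0.
Proof.
move=> [_ hk]; have [c hc] := hrk w.
rewrite hc ip_sumr big1 // => i _.
by rewrite ipZr; have [_ ->] := hk i; rewrite mulr0.
Qed.

Lemma K_M k : K k -> M k. Proof. by case. Qed.

Definition W := [set w | M w /\ forall k, K k -> <<w, k>> = 0].

Lemma W0 : W 0.
Proof. by split; [exact: subspace0 hM | move=> k _; rewrite ip0l]. Qed.
Lemma Wlin a x y : W x -> W y -> W (a *: x + y).
Proof.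
move=> [mx hx] [my hy]; split; first by apply: hM.2.1.
by move=> k kk; rewrite ip_linl hx // hy // mulr0 addr0.
Qed.
Lemma W_sum m (c : 'I_m -> C) (f : 'I_m -> V) :
  (forall i, W (f i)) -> W (\sum_(i < m) c i *: f i).
Proof.
move=> hf; elim/big_rec: _ => [|i y _ hy]; first exact: W0.
exact: Wlin.
Qed.

Lemma decomp x : M x -> exists k w, K k /\ W w /\ x = k + w.
Proof.
move=> mx; have [p [kp hp]] := projection K_sub x.
exists p, (x - p); split => //; split; last by rewrite addrC subrK.
split; last exact: hp.
exact: (subspaceB hM mx (K_M kp)).
Qed.

Definition orthon m (f : 'I_m -> V) :=
  (forall i, W (f i)) /\ (forall i j, <<f i, f j>> = (i == j)%:R).

Lemma orthon_coef m (f : 'I_m -> V) (a : 'I_m -> C) j : orthon f ->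
  <<\sum_(i < m) a i *: f i, f j>> = a j.
Proof.
move=> [_ hf]; rewrite ip_suml (bigD1 j) //= ipZl hf eqxx mulr1 big1 ?addr0 //.
by move=> i /negbTE ij; rewrite ipZl hf ij mulr0.
Qed.

Lemma orthon_bound m (f : 'I_m -> V) : orthon f -> (m <= n + n)%N.
Proof.
move=> hf; rewrite leqNgt; apply/negP => hm.
pose A : 'M[C]_(m, n + n) := \matrix_(i, j)
  match split j with inl j' => <<Rk (f i), e j'>> | inr j' => <<f i, e j'>> end.
have nrf : ~~ row_free A.
  rewrite /row_free; apply/negP => /eqP hr.
  by move: (rank_leq_col A); rewrite hr leqNgt hm.
rewrite -kermx_eq0 in nrf.
have [i hi] : exists i, row i (kermx A) != 0.
  apply/not_existsP => hall; move/negP: nrf; apply; apply/eqP/row_matrixP => i.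
  by rewrite row0; apply/eqP/negbNE/negP/hall.
pose c := row i (kermx A).
have cA : c *m A = 0 by rewrite -row_mul mulmx_ker row0.
pose y := \sum_(k < m) c 0 k *: f k.
have hy j : (c *m A) 0 j = match split j with
    inl j' => <<Rk y, e j'>> | inr j' => <<y, e j'>> end.
  rewrite mxE; transitivity (\sum_k c 0 k * (match split j with
    inl j' => <<Rk (f k), e j'>> | inr j' => <<f k, e j'>> end)).
    by apply: eq_bigr => k _; rewrite [A k j]mxE.
  case: (split j) => j'.
    by rewrite /y Rk_sum ip_suml; apply: eq_bigr => k _; rewrite ipZl.
  by rewrite /y ip_suml; apply: eq_bigr => k _; rewrite ipZl.
have Ky : K y.
  split; first by case: (W_sum (c 0) hf.1).
  move=> j; split.
    by have := hy (lshift n j); rewrite cA mxE split_lshift => <-.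
  by have := hy (rshift n j); rewrite cA mxE split_rshift => <-.
have y0 : y = 0.
  by apply: (@ip_eq0 _ _ H); have [_ ] := W_sum (c 0) hf.1; apply.
move/eqP: hi; apply; apply/rowP => k.
have := orthon_coef (c 0) k hf; rewrite -/y y0 ip0l => <-; by rewrite [RHS]mxE.
Qed.

Lemma max_orthon : exists d (f : 'I_d -> V), orthon f /\
  forall g : 'I_d.+1 -> V, ~ orthon g.
Proof.
apply: contrapT => hno.
have hall d : exists f : 'I_d -> V, orthon f.
  elim: d => [|d [f hf]].
    by exists (fun _ => 0); split => [i|[]]; [exact: W0|].
  apply: contrapT => hnf; apply: hno; exists d, f; split => // g hg.
  by apply: hnf; exists g.
have [f hf] := hall (n + n).+1.
by move: (orthon_bound hf); rewrite ltnn.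
Qed.

Lemma sqrt_nsq_pos x : x != 0 -> 0 < hn x.
Proof.
move=> x0; rewrite lt_def hnorm_ge0 andbT; apply/eqP => h; move/eqP: x0; apply.
exact: hnorm_eq0 h.
Qed.

Lemma orthon_span d (f : 'I_d -> V) : orthon f -> (forall g : 'I_d.+1 -> V, ~ orthon g) ->
  forall w, W w -> w = \sum_(i < d) <<w, f i>> *: f i.
Proof.
move=> hf hmax w Ww.
pose r := w - \sum_(i < d) <<w, f i>> *: f i.
have Wr : W r by rewrite /r addrC -scaleN1r; apply: Wlin => //; apply: W_sum; case: hf.
have rf j : <<r, f j>> = 0 by rewrite /r ipBl orthon_coef // subrr.
apply/eqP; rewrite -subr_eq0 -/r; apply/negP => r0.
pose t := (hn r)^-1.
have hr0 := sqrt_nsq_pos (introN idP r0).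
pose r' := t%:C *: r.
have Wr' : W r' by rewrite /r' -[_ *: r]addr0; apply: Wlin => //; exact: W0.
have r'r' : <<r', r'>> = 1.
  rewrite ipxxE -/(nsq H r') /r' nsqZ -hnorm_nsq /t -exprMn mulVf ?gt_eqF //.
  by rewrite expr1n.
have r'f j : <<r', f j>> = 0 by rewrite /r' ipZl rf mulr0.
have fr' j : <<f j, r'>> = 0 by rewrite ip_conj r'f conjc0.
apply: (hmax (fun j => if unlift ord_max j is Some i then f i else r')).
split.
  by move=> j; case: (unliftP ord_max j) => [i _|_] //; case: hf.
move=> i j.
case: (unliftP ord_max i) => [i' -> | ->]; case: (unliftP ord_max j) => [j' -> | ->].
- by rewrite (inj_eq (@lift_inj _ _)); case: hf.
- by rewrite fr' eq_sym (negbTE (neq_lift _ _)).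
- by rewrite r'f (negbTE (neq_lift _ _)).
- by rewrite r'r' eqxx.
Qed.

Lemma T_kw k w : K k -> T (k + w) = k + T w.
Proof. by move=> kk; rewrite /T RkD K_Rk // add0r addrA. Qed.

Lemma pyth k w : K k -> W w -> nsq H (k + w) = nsq H k + nsq H w.
Proof.
move=> kk [_ hw]; rewrite nsqD (ip_conj _ w k) hw // conjc0 mulr0 addr0 //.
Qed.

Lemma pythT k w : K k -> W w -> nsq H (T (k + w)) = nsq H k + nsq H (T w).
Proof.
move=> kk [_ hw]; rewrite T_kw // nsqD /T ipDr K_orth // (ip_conj _ w k) hw //.
by rewrite conjc0 addr0 mulr0 addr0.
Qed.

Definition xc d (v : 'rV[R]_(d + d)) i := v ord0 (lshift d i).
Definition yc d (v : 'rV[R]_(d + d)) i := v ord0 (rshift d i).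
Definition acoef d (v : 'rV[R]_(d + d)) i : C := (xc v i) +i* (yc v i).
Definition wv d (f : 'I_d -> V) v := \sum_(i < d) acoef v i *: f i.
Definition Qf d (g : 'I_d -> V) (v : 'rV[R]_(d + d)) : R :=
  \sum_(i < d) \sum_(j < d)
    ((xc v i * xc v j + yc v i * yc v j) * complex.Re <<g i, g j>>
     - (yc v i * xc v j - xc v i * yc v j) * complex.Im <<g i, g j>>).

Lemma Qf_E d (g : 'I_d -> V) v :
  complex.Re <<\sum_(i < d) acoef v i *: g i, \sum_(j < d) acoef v j *: g j>> = Qf g v.
Proof.
rewrite ip_suml Re_sum; apply: eq_bigr => i _.
rewrite ipZl ip_sumr mulr_sumr Re_sum; apply: eq_bigr => j _.
rewrite ipZr /acoef; move: (<<g i, g j>>) => [p q] /=; ring.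
Qed.

Lemma Qf_cont d (g : 'I_d -> V) : continuous (Qf g).
Proof.
apply: cont_sum => i; apply: cont_sum => j.
apply: cont_sub; apply: cont_mul; try exact: cont_cst.
- by apply: cont_add; apply: cont_mul; apply: cont_coord.
- by apply: cont_sub; apply: cont_mul; apply: cont_coord.
Qed.

Lemma attains : (exists x, M x /\ hn x = 1) ->
  exists x0, M x0 /\ hn x0 = 1 /\ forall x, M x -> hn x = 1 -> hn (T x0) <= hn (T x).
Proof.
move=> [x1 [mx1 hx1]].
have [d [f [hf hmax]]] := max_orthon.
have span := orthon_span hf hmax.
pose vw (w : V) : 'rV[R]_(d + d) := \row_j
  match split j with inl i => complex.Re <<w, f i>> | inr i => complex.Im <<w, f i>> end.
have acoef_vw w i : acoef (vw w) i = <<w, f i>>.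
  rewrite /acoef /xc /yc !mxE split_lshift split_rshift.
  by case: (<<w, f i>>).
have wv_vw w : W w -> wv f (vw w) = w.
  move=> Ww; rewrite /wv {2}(span w Ww); apply: eq_bigr => i _; by rewrite acoef_vw.
pose N := Qf f.
pose Obj v := 1 - N v + Qf (fun i => T (f i)) v.
have NE v : N v = nsq H (wv f v) by rewrite /N -Qf_E.
have QTE v : Qf (fun i => T (f i)) v = nsq H (T (wv f v)) by rewrite -Qf_E /wv T_sum.
have Wwv v : W (wv f v) by apply: W_sum; case: hf.
pose Knz := exists k, K k /\ k <> 0.
pose A := [set v | N v <= 1 /\ (Knz \/ N v = 1)].
have key x : M x -> hn x = 1 -> exists v, A v /\ Obj v = nsq H (T x).
  move=> mx hx; have [k [w [kk [Ww ex]]]] := decomp mx; subst x.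
  have nx : nsq H k + nsq H w = 1 by rewrite -pyth // -hnorm_nsq hx expr1n.
  exists (vw w); split; last by rewrite /Obj QTE NE wv_vw // pythT //; lra.
  rewrite /A /= NE wv_vw //.
  split; first by have := nsq_ge0 H k; lra.
  have [k0|kn0] := eqVneq k 0.
    by right; move: nx; rewrite k0 /nsq ip0l /=; lra.
  by left; exists k; split => //; apply/eqP.
have A0 : A !=set0 by have [v [Av _]] := key _ mx1 hx1; exists v.
have Acl : closed A.
  have cN : continuous N by exact: Qf_cont.
  have cl1 : closed (N @^-1` [set r | r <= 1]).
    by apply: preimage_closed; [move=> v _; exact: cN | exact: closed_le].
  have [hk|hk] := pselect Knz.
    rewrite (_ : A = N @^-1` [set r | r <= 1]) //.
    by apply/funext => v; apply/propext; split => [[]|] //; split => //; left.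
  rewrite (_ : A = N @^-1` [set r | r <= 1] `&` N @^-1` [set r | r = 1]).
    apply: closedI => //.
    by apply: preimage_closed; [move=> v _; exact: cN | exact: closed_eq].
  apply/funext => v; apply/propext; split => [[h1 [//|h2]]|[h1 h2]]; first by split.
  by split => //; right.
have Acpt : compact A.
  have Bc : compact [set v : 'rV[R]_(d + d) | forall i, `[(-1 : R), 1] (v ord0 i)].
    exact: (@rV_compact R _ (fun=> `[(-1 : R), 1]) (fun=> @segment_compact R _ _)).
  apply: (subclosed_compact Acl Bc).
  move=> v [Nv _] j /=; rewrite in_itv /= -ler_norml.
  have hw : hn (wv f v) <= 1.
    rewrite /hnorm -/(nsq H _) -NE -sqrtr1; exact: ler_wsqrtr.
  have hfi i : hn (f i) = 1.
    by rewrite /hnorm; case: hf => _ ->; rewrite eqxx /= sqrtr1.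
  case: (split_ordP j) => i ->.
    have := CSabs H (wv f v) (f (i : 'I_d)).
    rewrite /wv orthon_coef // hfi mulr1 /acoef /= => h.
    by apply: le_trans h hw.
  have := Im_ip_bound H (wv f v) (f i).
  rewrite /wv orthon_coef // hfi mulr1 /acoef /= => h.
  by apply: le_trans h hw.
have Ocont : continuous Obj.
  apply: cont_add; last exact: Qf_cont.
  by apply: cont_sub; [exact: cont_cst | exact: Qf_cont].
have [c cA cmin] := EVT_min_rV A0 Acpt (continuous_subspaceT Ocont).
move: cA; rewrite inE => -[Nc1 hc].
pose s := 1 - N c.
have s0 : 0 <= s by rewrite /s subr_ge0.
have [k0 [kk0 nk0]] : exists k0, K k0 /\ nsq H k0 = s.
  have [s00|sn0] := eqVneq s 0.
    by exists 0; split; [exact: subspace0 K_sub | rewrite s00 /nsq ip0l].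
  case: hc => [[k1 [kk1 k10]]|hN1]; last by move/eqP: sn0; rewrite /s hN1 subrr.
  have hk1 : 0 < hn k1 by apply: sqrt_nsq_pos; apply/eqP.
  exists ((Num.sqrt s / hn k1)%:C *: k1); split; first exact: subspaceZ K_sub kk1.
  rewrite nsqZ -hnorm_nsq -exprMn mulfVK ?gt_eqF // sqr_sqrtr //.
exists (k0 + wv f c); split.
  by apply: subspaceD hM (K_M kk0) (Wwv c).1.
split.
  rewrite /hnorm -/(nsq H _) pyth // nk0 -NE /s subrK sqrtr1 //.
move=> x mx hx.
have [v [Av hv]] := key x mx hx.
have e0 : nsq H (T (k0 + wv f c)) = Obj c.
  by rewrite pythT // nk0 /Obj QTE /s.
have hle : Obj c <= Obj v by apply: cmin; rewrite inE.
rewrite hv -e0 in hle.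
exact: ler_wsqrtr hle.
Qed.
End Main.

Theorem lemma3p8 (R : realType) (V : lmodType R[i]) (H : hilbert V)
  (Rk : V -> V) :
  bounded_linear H Rk -> finite_rank Rk ->
  ANstar H (fun x : V => x + Rk x).
Proof.
move=> [hlin [B hB]] [n [e hrk]] M hM hM0.
have [x [mx xn0]] : exists x, M x /\ x <> 0.
  apply: contrapT => hno; apply: hM0; apply/funext => y; apply/propext; split.
    move=> my; apply: contrapT => hy; apply: hno; exists y; split => //.
  by move=> ->; exact: subspace0 hM.
have hx0 : 0 < hnorm H x by apply: sqrt_nsq_pos; apply/eqP; exact: xn0.
pose u := ((hnorm H x)^-1)%:C *: x.
have hu : hnorm H u = 1.
  by rewrite /u hnormZ ger0_norm ?invr_ge0 ?ltW // mulVf // gt_eqF.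
have mu : M u by exact: subspaceZ hM mx.
have [x0 [mx0 [hx1 hmin]]] := attains hlin hB hrk hM (ex_intro _ u (conj mu hu)).
exists x0; split => //; split => //.
rewrite /restr_lower_bound.
apply/eqP; rewrite eq_le; apply/andP; split.
  apply: lb_le_inf.
    by exists (hnorm H (x0 + Rk x0)); exists x0.
  by move=> _ [y [my hy] <-]; exact: hmin.
apply: ge_inf; last by exists x0.
by exists 0 => _ [y _ <-]; exact: hnorm_ge0.
Qed.
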